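(* Let $\{X_n\}_{n=-\infty}^{\infty}$ be a stationary and ergodic time series taking values in a finite alphabet $\mathcal{X}$. Let $K_n\ge1$ and $J_n\ge1$ be nondecreasing sequences of positive integers with $K_n\to\infty$, $J_n\to\infty$ and $\lim_{n\to\infty}J_n/n=0$. Then $\lim_{n\to\infty}\kappa_n=\infty$ almost surely.
   Context: Notation: $X_m^n=(X_m,\dots,X_n)$. For $k\ge1$ and $n\ge0$, $\tau^k_0(n)=0$ and for $i\ge1$, $\tau^k_i(n)=\min\{t>\tau^k_{i-1}(n): X_{n-k+1-t}^{n-t}=X_{n-k+1}^n\}$. Define $\kappa_n=\max\{1\le k\le K_n:\tau^k_{J_n}(n)\le n-k+1\}$ if such a $k$ exists, and $\kappa_n=0$ otherwise; i.e. $\kappa_n$ is the largest $k\le K_n$ such that the block $X_{n-k+1}^n$ has at least $J_n$ earlier occurrences within the data segment $X_0^n$. *)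

(* Defs.v *)
From HB Require Import structures.
From mathcomp Require Import all_boot all_order all_algebra.
From mathcomp Require Import all_classical all_reals all_analysis.
Set Implicit Arguments. Unset Strict Implicit. Unset Printing Implicit Defensive.
Import Order.TTheory GRing.Theory Num.Theory.
Local Open Scope classical_set_scope.
Local Open Scope ring_scope.

Section Defs.
Variable A : finType.

Definition cyl (ts : seq int) (s : seq A) : set (int -> A) :=
  [set x | all2 (fun t a => x t == a) ts s].

Definition cylinders : set (set (int -> A)) :=
  [set C | exists ts s, C = cyl ts s].

Definition path_measurable (B : set (int -> A)) : Prop := <<s cylinders >> B.

Definition shift (x : int -> A) : int -> A := fun t => x (t + 1).

Definition path_of (T : Type) (X : int -> T -> A) (w : T) : int -> A :=
  fun t => X t w.

Definition stationary d (T : measurableType d) (R : realType)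
  (P : probability T R) (X : int -> T -> A) : Prop :=
  forall (ts : seq int) (s : seq A) (m : int),
    P (path_of X @^-1` cyl ts s) =
    P (path_of X @^-1` cyl [seq t + m | t <- ts] s).

Definition ergodic d (T : measurableType d) (R : realType)
  (P : probability T R) (X : int -> T -> A) : Prop :=
  forall B : set (int -> A), path_measurable B -> shift @^-1` B = B ->
    P (path_of X @^-1` B) = 0%E \/ P (path_of X @^-1` B) = 1%E.

Definition block_match (x : int -> A) (n k t : nat) : bool :=
  [forall i : 'I_k,
     x (n%:Z - k%:Z + 1 + i%:Z - t%:Z) == x (n%:Z - k%:Z + 1 + i%:Z)].

(* Number of earlier occurrences of x_{n-k+1}^n lying within x_0^n:
   lags t with 1 <= t <= n-k+1, i.e. tau^k_j(n) <= n-k+1. *)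
Definition occ_count (x : int -> A) (n k : nat) : nat :=
  \sum_(1 <= t < (n + 2 - k)%N) block_match x n k t.

(* kappa_n: largest 1 <= k <= K_n with at least J_n earlier occurrences
   (tau^k_{J_n}(n) <= n-k+1), and 0 if none. *)
Definition kappa (K J : nat -> nat) (x : int -> A) (n : nat) : nat :=
  \max_(k < (K n).+1 | (1 <= k)%N && (J n <= occ_count x n k)%N) k.

End Defs.

(* Main.v *)
Require Import Defs.
From HB Require Import structures.
From mathcomp Require Import all_boot all_order all_algebra.
From mathcomp Require Import all_classical all_reals all_analysis.
From mathcomp Require Import zify lra.
Import Order.TTheory GRing.Theory Num.Theory.
Local Open Scope classical_set_scope.
Local Open Scope ring_scope.
Set Implicit Arguments. Unset Strict Implicit. Unset Printing Implicit Defensive.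

Section PM.
Variable A : finType.

Definition dep (ts : seq int) (S : set (int -> A)) :=
  forall x y, (forall t, t \in ts -> x t = y t) -> S x -> S y.

Lemma cylE ts (s : seq A) (x : int -> A) : cyl ts s x <-> map x ts = s.
Proof.
rewrite /cyl /=; elim: ts s => [|t ts IH] [|a s] //=.
split => [/andP[/eqP -> /IH ->]//|[<- /IH H]].
by rewrite eqxx /=; apply/H.
Qed.

Lemma pm_set0 : path_measurable (@set0 (int -> A)).
Proof. exact: (@sigma_algebra0 _ setT (@cylinders A)). Qed.

Lemma pm_bigcup (F : nat -> set (int -> A)) :
  (forall n, path_measurable (F n)) -> path_measurable (\bigcup_n F n).
Proof. exact: (@sigma_algebra_bigcup _ setT (@cylinders A)). Qed.

Lemma pm_setC (S : set (int -> A)) : path_measurable S -> path_measurable (~` S).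
Proof. by move=> h; rewrite -setTD; exact: (@sigma_algebraCD _ setT (@cylinders A)). Qed.

Lemma pm_setU (S1 S2 : set (int -> A)) :
  path_measurable S1 -> path_measurable S2 -> path_measurable (S1 `|` S2).
Proof.
move=> h1 h2.
have -> : S1 `|` S2 = \bigcup_n (if n is 0 then S1 else S2).
  apply/seteqP; split=> x.
    by case=> h; [exists 0%N | exists 1%N].
  by case=> -[|n] _ h; [left|right].
by apply: pm_bigcup => -[|n]; [exact: h1|exact: h2].
Qed.

Lemma pm_bigcap (F : nat -> set (int -> A)) :
  (forall n, path_measurable (F n)) -> path_measurable (\bigcap_n F n).
Proof.
move=> h; rewrite -[X in path_measurable X]setCK setC_bigcap.
apply: pm_setC; apply: pm_bigcup => n; apply: pm_setC; exact: h.
Qed.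

Lemma pm_bigcup_int (F : int -> set (int -> A)) :
  (forall n, path_measurable (F n)) -> path_measurable (\bigcup_n F n).
Proof.
move=> h.
have -> : \bigcup_n F n = \bigcup_n (F (Posz n) `|` F (Negz n)).
  apply/seteqP; split=> x.
    by case=> -[n|n] _ hx; exists n => //; [left|right].
  by case=> n _ [hx|hx]; [exists (Posz n) | exists (Negz n)].
by apply: pm_bigcup => n; apply: pm_setU.
Qed.

Lemma pm_bigU (I : Type) (r : seq I) (Q : pred I) (F : I -> set (int -> A)) :
  (forall i, path_measurable (F i)) ->
  path_measurable (\big[setU/set0]_(i <- r | Q i) F i).
Proof.
move=> h; elim/big_ind: _ => //; [exact: pm_set0 | exact: pm_setU].
Qed.

Definition tupP ts (S : set (int -> A)) (s : (size ts).-tuple A) : bool :=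
  `[< exists y, S y /\ map y ts = s >].

Lemma decomp ts S : dep ts S ->
  S = \big[setU/set0]_(s : (size ts).-tuple A | tupP S s) cyl ts s.
Proof.
move=> hS; apply/seteqP; split => x.
  move=> Sx; pose s := map_tuple x (in_tuple ts).
  rewrite -bigcup_seq_cond; exists s.
    by rewrite /= mem_index_enum /=; apply/asboolP; exists x.
  by apply/cylE.
rewrite -bigcup_seq_cond => -[s] /= /andP[_ /asboolP [y [Sy ys]]] /cylE xs.
apply: (hS y) Sy => t tin.
by move: ys; rewrite -xs => /eq_in_map/(_ t tin).
Qed.

End PM.


Section Prob.
Variables (R : realType) (d : measure_display) (T : measurableType d)
  (P : probability T R) (A : finType) (X : int -> T -> A).
Hypothesis mX : forall (t : int) (a : A), measurable [set w | X t w = a].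
Hypothesis stat : stationary P X.

Notation pth := (path_of X).

Lemma mcyl ts (s : seq A) : measurable (pth @^-1` cyl ts s).
Proof.
elim: ts s => [|t ts IH] [|a s].
- have -> : pth @^-1` cyl [::] [::] = setT by apply/seteqP; split.
  exact: measurableT.
- have -> : pth @^-1` cyl [::] (a :: s) = set0 by apply/seteqP; split.
  exact: measurable0.
- have -> : pth @^-1` cyl (t :: ts) [::] = set0 by apply/seteqP; split.
  exact: measurable0.
- have -> : pth @^-1` cyl (t :: ts) (a :: s) =
     [set w | X t w = a] `&` pth @^-1` cyl ts s.
    apply/seteqP; split=> w; rewrite /cyl /path_of /=.
      by move=> /andP[/eqP -> h].
    by move=> [-> h]; rewrite eqxx.
  exact: measurableI.
Qed.

Lemma pm_preimage (B : set (int -> A)) :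
  path_measurable B -> measurable (pth @^-1` B).
Proof.
move=> hB.
apply: (smallest_sub (X := [set B | measurable (pth @^-1` B)])) hB.
  split.
  - by rewrite /= preimage_set0; exact: measurable0.
  - move=> C /= hC; have -> : pth @^-1` ([set: int -> A] `\` C) = setT `\` pth @^-1` C by [].
    exact: measurableD.
  - move=> F hF /=; have -> : pth @^-1` (\bigcup_n F n) = \bigcup_n pth @^-1` F n by [].
    exact: bigcupT_measurable.
by move=> C [ts [s ->]]; exact: mcyl.
Qed.

Lemma measure_bigU_disj (I : eqType) (l : seq I) (Q : pred I) (G : I -> set T) :
  uniq l -> (forall i, measurable (G i)) ->
  (forall i j, i != j -> G i `&` G j = set0) ->
  P (\big[setU/set0]_(i <- l | Q i) G i) = (\sum_(i <- l | Q i) P (G i))%E.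
Proof.
move=> + mG dG; elim: l => [|a l IH] /=; first by rewrite !big_nil measure0.
move=> /andP[al ul]; rewrite !big_cons; case: (Q a); last exact: IH ul.
rewrite measureU //; first by congr (_ + _); exact: IH ul.
- by apply: bigsetU_measurable => i _; exact: mG.
- have : forall i, i \in l -> G a `&` G i = set0.
    by move=> i il; apply: dG; apply: contraNneq al => ->.
  elim: (l) => [|b l' IH'] h; first by rewrite big_nil setI0.
  rewrite big_cons; case: (Q b); last by apply: IH' => i il; apply: h; rewrite in_cons il orbT.
  rewrite setIUr h ?mem_head // set0U; apply: IH' => i il.
  by apply: h; rewrite in_cons il orbT.
Qed.

Lemma measure_dep ts S : dep ts S ->
  P (pth @^-1` S) = (\sum_(s : (size ts).-tuple A | tupP S s) P (pth @^-1` cyl ts s))%E.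
Proof.
move=> hS; rewrite {1}(decomp hS).
rewrite (big_morph (preimage pth) (@preimage_setU _ _ pth) (preimage_set0 pth)).
apply: measure_bigU_disj.
- exact: index_enum_uniq.
- by move=> s; apply: mcyl.
- move=> s s' ss'; apply/seteqP; split => // w [/cylE h1 /cylE h2].
  by move/eqP: ss'; apply; apply: val_inj; exact: (etrans (esym h1) h2).
Qed.

Lemma stat_shift ts S (m : int) : dep ts S ->
  P (pth @^-1` [set x | S (fun t => x (t + m))]) = P (pth @^-1` S).
Proof.
move=> hS; rewrite (measure_dep hS).
have hS' : dep [seq t + m | t <- ts] [set x | S (fun t => x (t + m))].
  move=> x y h /=; apply: hS => t tin; apply: h; exact: map_f.
have -> : [set x | S (fun t => x (t + m))] =
   \big[setU/set0]_(s : (size ts).-tuple A | tupP S s) cyl [seq t + m | t <- ts] s.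
  apply/seteqP; split => x.
    move=> /= Sx; have := Sx; rewrite {1}(decomp hS) -!bigcup_seq_cond.
    case=> s hs /cylE hc; exists s => //; apply/cylE; rewrite -map_comp; exact: hc.
  rewrite -bigcup_seq_cond => -[s] hs /cylE hc /=.
  rewrite (decomp hS) -bigcup_seq_cond; exists s => //; apply/cylE.
  by rewrite -hc -map_comp.
rewrite (big_morph (preimage pth) (@preimage_setU _ _ pth) (preimage_set0 pth)).
rewrite measure_bigU_disj.
- by apply: eq_bigr => s _; symmetry; exact: stat.
- exact: index_enum_uniq.
- by move=> s; apply: mcyl.
- move=> s s' ss'; apply/seteqP; split => // w [/cylE h1 /cylE h2].
  by move/eqP: ss'; apply; apply: val_inj; exact: (etrans (esym h1) h2).
Qed.

End Prob.

Section Blocks.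
Local Open Scope nat_scope.
Variables (A : finType) (k : nat) (b : k.-tuple A).

Definition occ (x : int -> A) (i : int) : bool :=
  [forall j : 'I_k, x (i + j%:Z)%R == tnth b j].

Definition cnt (x : int -> A) (i : int) (n : nat) : nat :=
  \sum_(l < n) occ x (i + l%:Z)%R.

Lemma occ_shift x (m i : int) : occ (fun t => x (t + m)%R) i = occ x (i + m)%R.
Proof. by apply: eq_forallb => j; rewrite addrAC. Qed.

Lemma cnt_shift x (m i : int) n : cnt (fun t => x (t + m)%R) i n = cnt x (i + m)%R n.
Proof. by apply: eq_bigr => l _; rewrite occ_shift addrAC. Qed.

Lemma cnt_split x i m n : cnt x i (m + n) = cnt x i m + cnt x (i + m%:Z)%R n.
Proof.
rewrite /cnt big_split_ord /=; congr (_ + _).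
by apply: eq_bigr => l _ /=; rewrite PoszD addrA.
Qed.

Lemma cnt_le x i n : cnt x i n <= n.
Proof.
rewrite /cnt -[X in _ <= X]card_ord -sum1_card.
by apply: leq_sum => l _; case: (occ _ _).
Qed.

Lemma cnt0 x i : cnt x i 0 = 0.
Proof. by rewrite /cnt big_ord0. Qed.

Lemma occ_dep x y i : (forall j, j < k -> x (i + j%:Z)%R = y (i + j%:Z)%R) ->
  occ x i = occ y i.
Proof. by move=> h; apply: eq_forallb => j; rewrite h. Qed.

Lemma cnt_dep x y i n : (forall l, l < n + k -> x (i + l%:Z)%R = y (i + l%:Z)%R) ->
  cnt x i n = cnt y i n.
Proof.
move=> h; apply: eq_bigr => l _; congr (nat_of_bool _); apply: occ_dep => j jk.
rewrite -addrA -PoszD; apply: h; have := ltn_ord l; lia.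
Qed.

Definition goodb N c x i : bool :=
  [exists n : 'I_N.+1, (0 < n) && (c * cnt x i n < 2 * n)].

Lemma sum_split (F : nat -> nat) M n : n <= M ->
  \sum_(l < M) F l = \sum_(l < n) F l + \sum_(l < M - n) F (n + l).
Proof.
move=> nM; rewrite -!(big_mkord xpredT) (@big_cat_nat _ _ _ n 0 M _ _ (leq0n n) nM) /=.
congr (_ + _); rewrite -{1}[n]add0n big_addn.
by rewrite big_mkord; apply: eq_bigr => l _; rewrite addnC.
Qed.

Lemma cover_ineq N c x : forall M i,
  c * cnt x i M <= 2 * (M + N) + c * \sum_(l < M) ~~ goodb N c x (i + l%:Z)%R.
Proof.
elim/ltn_ind => M IH i.
case: M IH => [|M'] IH; first by rewrite cnt0 muln0.
set M := M'.+1.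
case g: (goodb N c x i).
  move: g => /existsP [n /andP [n0 hn]].
  have nN : (n <= N)%N by have := ltn_ord n; lia.
  case: (leqP M n) => Mn.
    have : cnt x i n = cnt x i M + cnt x (i + M%:Z)%R (n - M) by rewrite -cnt_split subnKC.
    lia.
  have h1 : cnt x i M = cnt x i n + cnt x (i + n%:Z)%R (M - n).
    by rewrite -cnt_split subnKC // ltnW.
  have h2 : \sum_(l < M) ~~ goodb N c x (i + l%:Z)%R =
      \sum_(l < n) ~~ goodb N c x (i + l%:Z)%R +
      \sum_(l < M - n) ~~ goodb N c x (i + n%:Z + l%:Z)%R.
    rewrite (sum_split (fun l => ~~ goodb N c x (i + l%:Z)%R) (ltnW Mn)).
    by congr (_ + _); apply: eq_bigr => l _; rewrite PoszD addrA.
  have := IH (M - n) ltac:(lia) (i + n%:Z)%R.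
  lia.
have h1 : cnt x i M = cnt x i 1 + cnt x (i + 1%:Z)%R M'.
  by rewrite -cnt_split.
have h2 : \sum_(l < M) ~~ goodb N c x (i + l%:Z)%R =
    1 + \sum_(l < M') ~~ goodb N c x (i + 1%:Z + l%:Z)%R.
  rewrite (sum_split (fun l => ~~ goodb N c x (i + l%:Z)%R) (_ : 1 <= M)) //.
  rewrite big_ord1 addr0 g /=; congr (_ + _).
  by rewrite subn1 /=; apply: eq_bigr => l _; rewrite PoszD addrA.
have h3 := cnt_le x i 1.
have := IH M' (ltnSn _) (i + 1%:Z)%R.
move=> hI; rewrite h1 h2 !mulnDr; have eM : M = M'.+1 by []. have h4 : c * cnt x i 1 <= c * 1 by rewrite leq_mul2l h3 orbT. lia.
Qed.

End Blocks.

Section Win.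
Variable A : finType.

Definition win (i : int) (L : nat) : seq int := [seq (i + l%:Z)%R | l <- iota 0 L].

Lemma win_mem i L l : (l < L)%N -> (i + l%:Z)%R \in win i L.
Proof. by move=> lL; apply: map_f; rewrite mem_iota. Qed.

Lemma pm_dep ts (S : set (int -> A)) : dep ts S -> path_measurable S.
Proof.
move=> hS; rewrite (decomp hS); apply: pm_bigU => s.
by move=> M [_ hM]; apply: hM; exists ts, s.
Qed.

Variables (k : nat) (b : k.-tuple A).

Lemma dep_occ i : dep (win i k) [set x | occ b x i].
Proof.
move=> x y h /=; rewrite (@occ_dep _ _ b x y) // => j jk.
exact/h/win_mem.
Qed.

Lemma dep_cnt i n (Q : nat -> Prop) :
  dep (win i (n + k)) [set x | Q (cnt b x i n)].
Proof.
move=> x y h /=; rewrite (@cnt_dep _ _ b x y) // => l lk.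
exact/h/win_mem.
Qed.

Lemma goodb_dep N c x y i : (forall l, (l < N + k)%N -> x (i + l%:Z)%R = y (i + l%:Z)%R) ->
  goodb b N c x i = goodb b N c y i.
Proof.
move=> h; apply: eq_existsb => n; rewrite (@cnt_dep _ _ b x y) // => l lk.
apply: h; have := ltn_ord n; lia.
Qed.

Lemma dep_goodb N c i (Q : bool -> Prop) : dep (win i (N + k)) [set x | Q (goodb b N c x i)].
Proof.
move=> x y h /=; rewrite (@goodb_dep N c x y) // => l lk.
exact/h/win_mem.
Qed.

Lemma goodb_shift N c x (m i : int) :
  goodb b N c (fun t => x (t + m)%R) i = goodb b N c x (i + m)%R.
Proof. by apply: eq_existsb => n; rewrite cnt_shift. Qed.

Definition Estar (c : nat) : set (int -> A) :=
  [set x | exists j : int, forall N : nat, exists n : nat,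
      (N <= n)%N /\ (c * cnt b x j n < n)%N].

Lemma Estar_pm c : path_measurable (Estar c).
Proof.
have -> : Estar c = \bigcup_(j : int) \bigcap_(N : nat) \bigcup_(n : nat)
     [set x | (N <= n)%N /\ (c * cnt b x j n < n)%N].
  apply/seteqP; split => x.
    by case=> j h; exists j => // N _; have [n hn] := h N; exists n.
  case=> j _ h; exists j => N; have [n _ hn] := h N I; by exists n.
apply: pm_bigcup_int => j; apply: pm_bigcap => N; apply: pm_bigcup => n.
apply: (@pm_dep (win j (n + k))) => x y h [Nn hc]; split => //.
by rewrite -(@cnt_dep _ _ b x y) // => l lk; apply/h/win_mem.
Qed.

Lemma Estar_inv c : @Defs.shift A @^-1` Estar c = Estar c.
Proof.
apply/seteqP; split => x /=.
  case=> j h; exists (j + 1)%R => N; have [n [Nn hn]] := h N.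
  by exists n; split => //; move: hn; rewrite /Defs.shift cnt_shift.
case=> j h; exists (j - 1)%R => N; have [n [Nn hn]] := h N.
by exists n; split => //; rewrite /Defs.shift cnt_shift subrK.
Qed.

End Win.

Section Exp.
Variables (R : realType) (d : measure_display) (T : measurableType d)
  (P : probability T R).

Lemma int_sum_indic (M : nat) (E : nat -> set T) (c : R) :
  (forall i, measurable (E i)) -> 0 <= c ->
  (\int[P]_w (c * \sum_(i < M) \1_(E i) w)%:E =
   (c * \sum_(i < M) fine (P (E i)))%:E)%E.
Proof.
move=> mE c0.
under eq_integral do rewrite mulr_sumr -sumEFin.
rewrite ge0_integral_sum //; last 2 first.
- move=> i; apply/measurable_realfun.measurable_EFinP; apply: measurable_realfun.measurable_funM.
    exact: measurable_cst.
  exact: measurable_realfun.measurable_indic.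
- by move=> i w _; rewrite lee_fin mulr_ge0.
rewrite mulr_sumr -sumEFin; apply: eq_bigr => i _.
rewrite (@integralZl_indic _ _ _ _ _ measurableT (fun _ => E i)) //.
  by rewrite integral_indic // setIT EFinM fineK // fin_num_measure.
by move=> c0'; exfalso; move: c0; rewrite leNgt c0'.
Qed.

Lemma expect_ineq (M : nat) (E F : nat -> set T) (C c : R) :
  (forall i, measurable (E i)) -> (forall i, measurable (F i)) -> 0 <= c -> 0 <= C ->
  (forall w, c * \sum_(i < M) \1_(E i) w <= C + c * \sum_(i < M) \1_(F i) w) ->
  c * (\sum_(i < M) fine (P (E i))) <= C + c * \sum_(i < M) fine (P (F i)).
Proof.
move=> mE mF c0 C0 h.
have mS (G : nat -> set T) : (forall i, measurable (G i)) ->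
    measurable_fun (U := measurable_realfun.constructive_ereal_extended__canonical__measurable_structure_SigmaRing R) setT (EFin \o (fun w => (c * \sum_(i < M) \1_(G i) w))).
  move=> mG; apply/measurable_realfun.measurable_EFinP; apply: measurable_realfun.measurable_funM.
    exact: measurable_cst.
  apply: measurable_sum => i; exact: measurable_realfun.measurable_indic.
have ge0S (G : nat -> set T) w : (0 <= (c * \sum_(i < M) \1_(G i) w)%:E)%E.
  rewrite lee_fin mulr_ge0 // sumr_ge0 // => i _; exact: indic_ge0.
have := @ge0_le_integral _ _ _ P setT measurableT
  (fun w => (c * \sum_(i < M) \1_(E i) w)%:E)
  (fun w => (C%:E + (c * \sum_(i < M) \1_(F i) w)%:E))%E
  (fun w _ => ge0S E w) (mS E mE) _.
move=> H.
have Hle := H (emeasurable_funD (measurable_cst _) (mS F mF))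
  (fun w _ => ltac:(by rewrite -EFinD lee_fin)).
move: Hle; rewrite int_sum_indic // ge0_integralD //.
  rewrite (integral_cst P measurableT C%:E).
  set z := (C%:E * _)%E; have -> : z = (C%:E * 1)%E by rewrite /z; congr (_ * _)%E; exact: probability_setT.
  by rewrite mule1 int_sum_indic // -EFinD lee_fin.
exact: mS F mF.
Qed.

End Exp.

Section Det.
Local Open Scope nat_scope.
Variable A : finType.

Definition blk (x : int -> A) n k : k.-tuple A :=
  [tuple x ((n.+1 - k)%:Z + i%:Z)%R | i < k].

Lemma rev_sum (F : nat -> nat) L :
  \sum_(1 <= t < L.+1) F (L - t) = \sum_(l < L) F l.
Proof.
rewrite big_nat_rev /= -(big_mkord xpredT).
rewrite big_add1 /=.
apply: eq_big_nat => t /andP [_ tL].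
congr F; lia.
Qed.

Lemma occ_count_eq x n k : k <= n.+1 ->
  occ_count x n k = cnt (blk x n k) x 0 (n.+1 - k).
Proof.
move=> kn; rewrite /occ_count /cnt.
have -> : (n + 2 - k = (n.+1 - k).+1)%N by lia.
rewrite -(rev_sum (fun l => nat_of_bool (occ (blk x n k) x (0 + l%:Z)%R))); apply: eq_big_nat => t /andP [t1 tL].
rewrite add0r; congr (nat_of_bool _).
apply: eq_forallb => i; rewrite tnth_mktuple.
congr (x _ == x _).
  lia.
lia.
Qed.


Definition GoodD k (b : k.-tuple A) (x : int -> A) : Prop :=
  (forall i : nat, ~~ occ b x i%:Z) \/
  exists c N : nat, forall n, (N <= n)%N -> (n <= c * cnt b x 0 n)%N.

Lemma per_block (J : nat -> nat) k (b : k.-tuple A) x :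
  (forall c, exists N, forall n, N <= n -> J n * c <= n) ->
  GoodD b x -> exists N, forall n, N <= n -> occ b x (n.+1 - k)%:Z ->
     J n <= cnt b x 0 (n.+1 - k).
Proof.
move=> hJ [hn|[c [N0 hc]]].
  by exists 0 => n _; rewrite (negbTE (hn _)).
have [N1 hN1] := hJ (2 * c).
exists (N0 + N1 + 2 * k + 1) => n Nn _.
have h1 := hc (n.+1 - k) ltac:(lia).
have h2 := hN1 n ltac:(lia).
have c0 : 0 < c.
  rewrite lt0n; apply/negP => /eqP c0; rewrite c0 mul0n in h1; lia.
have : J n * c <= c * cnt b x 0 (n.+1 - k) by lia.
by rewrite mulnC leq_pmul2l.
Qed.

Lemma kappa_ge (K J : nat -> nat) x :
  (forall M, exists N, forall n, N <= n -> M <= K n) ->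
  (forall c, exists N, forall n, N <= n -> J n * c <= n) ->
  (forall k (b : k.-tuple A), GoodD b x) ->
  forall M, exists N, forall n, N <= n -> M <= kappa K J x n.
Proof.
move=> hK hJ hG [|k]; first by exists 0.
have [Nf hNf] := fin_all_exists (fun b : k.+1.-tuple A => per_block hJ (hG _ b)).
have [NK hNK] := hK k.+1.
pose mx := \max_(b : k.+1.-tuple A) Nf b.
have hmx : forall b, Nf b <= mx by move=> b; apply: (@leq_bigmax _ (fun b => Nf b) b).
exists (mx + NK + k.+1) => n Nn.
have kn : k.+1 <= n.+1 by lia.
have hb : J n <= occ_count x n k.+1.
  rewrite occ_count_eq //; apply: hNf.
    have := hmx (blk x n k.+1); lia.
  by apply/forallP => i; rewrite tnth_mktuple.
have kK : k.+1 < (K n).+1 by rewrite ltnS; apply: hNK; lia.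
have := @leq_bigmax_cond _ (fun i : 'I_(K n).+1 => (1 <= i) && (J n <= occ_count x n i))
  (fun i => nat_of_ord i) (Ordinal kK) ltac:(by rewrite /= hb).
by [].
Qed.

End Det.

Section Main.
Variables (R : realType) (d : measure_display) (T : measurableType d)
  (P : probability T R) (A : finType) (X : int -> T -> A).
Hypothesis mX : forall (t : int) (a : A), measurable [set w | X t w = a].
Hypothesis stat : stationary P X.
Hypothesis erg : ergodic P X.
Variables (k : nat) (b : k.-tuple A).

Notation pth := (path_of X).

Definition occE (i : int) := pth @^-1` [set x | occ b x i].

Lemma occE_m i : measurable (occE i).
Proof. exact: (pm_preimage mX (pm_dep (@dep_occ A k b i))). Qed.

Lemma occE_stat i : P (occE i) = P (occE 0).
Proof.
rewrite /occE.
have -> : [set x | occ b x i] = [set x | [set x | occ b x 0] (fun t => x (t + i))].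
  by apply/seteqP; split => x /=; rewrite occ_shift add0r.
exact: (stat_shift mX stat i (@dep_occ A k b 0)).
Qed.

Definition badE N c (i : int) := pth @^-1` [set x | ~~ goodb b N c x i].
Definition GE N c := pth @^-1` [set x | goodb b N c x 0].

Lemma badE_m N c i : measurable (badE N c i).
Proof. exact: (pm_preimage mX (pm_dep (@dep_goodb A k b N c i (fun bb => ~~ bb)))). Qed.

Lemma GE_m N c : measurable (GE N c).
Proof. exact: (pm_preimage mX (pm_dep (@dep_goodb A k b N c 0 (fun bb => bb)))). Qed.

Lemma badE_stat N c i : P (badE N c i) = P (badE N c 0).
Proof.
rewrite /badE.
have -> : [set x | ~~ goodb b N c x i] =
   [set x | [set x | ~~ goodb b N c x 0] (fun t => x (t + i))].
  by apply/seteqP; split => x /=; rewrite goodb_shift add0r.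
exact: (stat_shift mX stat i (@dep_goodb A k b N c 0 (fun bb => ~~ bb))).
Qed.

Lemma fin_P (E : set T) : measurable E -> P E = (fine (P E))%:E.
Proof. by move=> mE; rewrite fineK // fin_num_measure. Qed.


Lemma Estar_sub c : pth @^-1` Estar b c `<=` \bigcup_N GE N c.
Proof.
move=> w [j hj].
case: j hj => m hj.
- have [n [Nn hn]] := hj (c * m)%N.
  have n0 : (0 < n)%N by lia.
  exists (n + m)%N => //; rewrite /GE /=; apply/existsP.
  exists (Ordinal (ltnSn (n + m))); apply/andP; split => /=; first lia.
  rewrite addnC cnt_split add0r.
  have h1 := cnt_le b (pth w) 0 m.
  have h2 : (c * cnt b (pth w) 0 m <= c * m)%N by rewrite leq_mul2l h1 orbT.
  lia.
- set r := m.+1.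
  have [n [Nn hn]] := hj (2 * r)%N.
  have e : cnt b (pth w) (Negz m) n =
      (cnt b (pth w) (Negz m) r + cnt b (pth w) (Negz m + r%:Z) (n - r))%N.
    by rewrite -cnt_split subnKC; last lia.
  have e0 : Negz m + r%:Z = 0 by rewrite NegzE addNr.
  rewrite e0 in e.
  have h2 : (c * cnt b (pth w) 0 (n - r) <= c * cnt b (pth w) (Negz m) n)%N.
    by rewrite leq_mul2l e leq_addl orbT.
  exists (n - r)%N => //; rewrite /GE /=; apply/existsP.
  exists (Ordinal (ltnSn (n - r))); apply/andP; split => /=; first lia.
  lia.
Qed.

Lemma GE_nd c : nondecreasing_seq (GE ^~ c).
Proof.
move=> N N' NN'; apply/asboolP => w /= /existsP [n hn]; apply/existsP.
have le : (N.+1 <= N'.+1)%N by rewrite ltnS.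
by exists (widen_ord le n).
Qed.


Lemma ind_bool (Q : T -> bool) w : \1_[set w | Q w] w = (Q w)%:R :> R.
Proof.
rewrite indicE; case: (boolP (Q w)) => h.
  by rewrite mem_set.
by rewrite memNset //=; apply/negP.
Qed.

Lemma Estar_null c : 8 < c%:R * fine (P (occE 0)) -> P (pth @^-1` Estar b c) = 0%E.
Proof.
move=> hc; set p := fine (P (occE 0)) in hc *.
have c0 : (0 : R) <= c%:R := ler0n _ _.
have p0 : 0 < p by nra.
case: (erg (Estar_pm b c) (Estar_inv b c)) => // h1; exfalso.
have mE : measurable (pth @^-1` Estar b c) := pm_preimage mX (Estar_pm b c).
have mU : measurable (\bigcup_N GE N c) by apply: bigcupT_measurable => N; exact: GE_m.
have hU : P (\bigcup_N GE N c) = 1%E.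
  apply/eqP; rewrite eq_le probability_le1 //= -h1.
  by apply: le_measure; rewrite ?inE //; exact: Estar_sub.
have cv : (P \o GE ^~ c) @ \oo --> 1%E.
  rewrite -hU; exact: (@nondecreasing_cvg_mu _ _ _ P _ (fun N => GE_m N c) mU (GE_nd c)).
move/fine_cvgP: cv => [_ cv].
have p4 : 0 < p / 4 by rewrite divr_gt0.
have [N _ hN] := (cvgrPdist_lt _ _).1 cv (p / 4) p4.
have hNN := hN N (leqnn N).
rewrite /= in hNN.
set g := fine (P (GE N c)) in hNN.
have Pbad : P (badE N c 0) = (1 - g)%:E.
  have -> : badE N c 0 = ~` GE N c.
    by apply/seteqP; split => w /=; [move/negP | move/negP].
  have e1 : P (~` GE N c) = (1 - P (GE N c))%E := probability_setC P (GE_m N c).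
  have e2 : P (GE N c) = g%:E := fin_P (GE_m N c).
  by rewrite e1 e2 EFinB.
set q := 1 - g in Pbad.
have qp : q < p / 4 by apply: le_lt_trans hNN; exact: ler_norm.
set M := N.+1.
have := @expect_ineq _ _ _ P M (fun i => occE i%:Z) (fun i => badE N c i%:Z)
   (2 * (M + N))%:R c%:R (fun i => occE_m _) (fun i => badE_m N c _) c0 (ler0n _ _).
have -> : \sum_(i < M) fine (P (occE i%:Z)) = M%:R * p.
  rewrite (eq_bigr (fun _ => p)); first by rewrite sumr_const card_ord mulr_natl.
  by move=> i _; rewrite occE_stat.
have -> : \sum_(i < M) fine (P (badE N c i%:Z)) = M%:R * q.
  rewrite (eq_bigr (fun _ => q)); first by rewrite sumr_const card_ord mulr_natl.
  by move=> i _; rewrite badE_stat Pbad.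
have pw : forall w : T, (c%:R : R) * \sum_(i < M) \1_(occE i) w <=
    (2 * (M + N))%:R + c%:R * \sum_(i < M) \1_(badE N c i) w.
  move=> w.
  have e3 : \sum_(i < M) \1_(occE i) w = (cnt b (pth w) 0 M)%:R :> R.
    rewrite /cnt natr_sum; apply: eq_bigr => i _; rewrite add0r.
    exact: (ind_bool (fun w => occ b (pth w) i%:Z) w).
  have e4 : \sum_(i < M) \1_(badE N c i) w =
      (\sum_(l < M) ~~ goodb b N c (pth w) (0 + l%:Z))%:R :> R.
    rewrite natr_sum; apply: eq_bigr => i _; rewrite add0r.
    exact: (ind_bool (fun w => ~~ goodb b N c (pth w) i%:Z) w).
  rewrite e3 e4 -!natrM -natrD ler_nat.
  exact: cover_ineq.
move=> /(_ pw) H.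
have hMq : c%:R * (M%:R * q) <= c%:R * (M%:R * (p / 4)).
  by apply: ler_wpM2l => //; apply: ler_wpM2l; [exact: ler0n | exact: ltW].
have eM : M%:R = N%:R + 1 :> R by rewrite /M -addn1 natrD.
have e2 : (2 * (M + N))%:R = 2 * (M%:R + N%:R) :> R by rewrite natrM natrD.
rewrite e2 in H.
have N0 : (0 : R) <= N%:R := ler0n _ _.
have h8 : 8 * M%:R < c%:R * p * M%:R.
  by rewrite ltr_pM2r // eM; lra.
nra.
Qed.


Lemma block_ae : {ae P, forall w, GoodD b (pth w)}.
Proof.
case: (eqVneq (P (occE 0)) 0%E) => h0.
  have hn : P.-negligible (\bigcup_(i : nat) occE i%:Z).
    apply: negligible_bigcup => i; exists (occE i%:Z); split => //.
    - exact: occE_m.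
    - exact: (etrans (occE_stat _) h0).
  apply: negligibleS hn => w /= nG.
  case: (pselect (exists i : nat, occ b (pth w) i%:Z)) => [[i hi]|hn'].
    by exists i.
  by exfalso; apply: nG; left => i; apply/negP => hi; apply: hn'; exists i.
set p := fine (P (occE 0)).
have p0 : 0 < p.
  rewrite /p fine_gt0 //; apply/andP; split.
    by rewrite lt0e h0 measure_ge0.
  by rewrite ltey_eq fin_num_measure //; exact: occE_m.
set c := Num.Def.archi_bound (8 / p).
have hc : 8 < c%:R * p.
  have := @archi_boundP _ (8 / p) ltac:(by rewrite divr_ge0 // ltW).
  by rewrite -/c ltr_pdivrMr.
exists (pth @^-1` Estar b c); split.
- exact: (pm_preimage mX (Estar_pm b c)).
- exact: Estar_null.
move=> w /= nG; exists 0 => N.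
case: (pselect (exists n, (N <= n)%N /\ (c * cnt b (pth w) 0 n < n)%N)) => // hn.
exfalso; apply: nG; right; exists c, N => n Nn.
rewrite leqNgt; apply/negP => hlt; apply: hn; exists n; split => //.
Qed.

End Main.

Theorem lemma2 (R : realType) (d : measure_display) (T : measurableType d)
  (P : probability T R) (A : finType) (X : int -> T -> A)
  (K J : nat -> nat) :
  (forall (t : int) (a : A), measurable [set w | X t w = a]) ->
  stationary P X -> ergodic P X ->
  (forall n, (1 <= K n)%N) -> (forall n, (1 <= J n)%N) ->
  (forall m n, (m <= n)%N -> (K m <= K n)%N) ->
  (forall m n, (m <= n)%N -> (J m <= J n)%N) ->
  (forall M, exists N, forall n, (N <= n)%N -> (M <= K n)%N) ->
  (forall M, exists N, forall n, (N <= n)%N -> (M <= J n)%N) ->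
  ((J n)%:R / n%:R : R) @[n --> \oo] --> 0 ->
  {ae P, forall w, forall M : nat, exists N : nat, forall n : nat,
      (N <= n)%N -> (M <= kappa K J (path_of X w) n)%N}.
Proof.
move=> mX stat erg K1 J1 Kmono Jmono Kinf Jinf Jlim.
have hJ : forall c, exists N, forall n, (N <= n)%N -> (J n * c <= n)%N.
  move=> c.
  have e0 : (0 : R) < 1 / (c.+1)%:R by rewrite divr_gt0 // ltr0n.
  have [N _ hN] := (cvgrPdist_lt _ _).1 Jlim _ e0.
  exists N.+1 => n Nn.
  have := hN n ltac:(by rewrite /= ltnW).
  rewrite /= sub0r normrN ger0_norm; last by rewrite divr_ge0 // ler0n.
  move=> h.
  have n0 : (0:R) < n%:R by rewrite ltr0n; lia.
  rewrite ltr_pdivrMr // div1r mulrC ltr_pdivlMr ?ltr0n // -natrM ltr_nat in h.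
  lia.
have hae : {ae P, forall w, forall k (b : k.-tuple A), GoodD b (path_of X w)}.
  apply: ae_foralln => k.
  apply: filter_forall => b.

  exact: (block_ae mX stat erg b).
apply: filterS hae => w hw.
exact: kappa_ge Kinf hJ hw.
Qed.
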